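(* There exists a $\mathbb{Q}$-linear map $\phi:\mathbb{Y}\to\mathbb{Q}[t]$ such that $\phi(Y_P)=t^{\mathrm{sink}(P)}$ for every signed poset $P$, where $\mathrm{sink}(P)$ is the number of sinks of $P$.
   Context: A signed graph $\Sigma$ is a finite graph (loops and multiple edges allowed) with $\mathrm{sgn}:E(\Sigma)\to\{+,-\}$; write $e:uv$ if $e$ has endpoints $u,v$. A coloring $\kappa:V(\Sigma)\to\mathbb{Z}$ is proper if $\kappa(u)\ne\mathrm{sgn}(e)\kappa(v)$ for every edge $e:uv$. An orientation assigns to each half-edge (incidence of an edge with an endpoint; a loop has two) an arrow toward or away from the vertex, such that on a positive edge exactly one of the two arrows points toward its vertex and on a negative edge both point toward or both point away. A cycle is a closed walk in which, considering only the edges of the walk, every vertex of the walk has at least one arrow pointing into it and one pointing out of it; an orientation is acyclic if it has no cycle; a sink is a vertex all of whose incident arrows point toward it (an isolated vertex is a sink). A signed poset is an acyclic orientation $P$ of a signed graph. A proper coloring $\kappa$ preserves $P$ if for every edge $e$ and each endpoint $v$ of $e$, with $u$ the other endpoint ($u=v$ for a loop), the arrow of $P$ at the incidence of $e$ with $v$ points toward $v$ iff $\kappa(v)>\mathrm{sgn}(e)\kappa(u)$. Let $Y_P=\sum_{\kappa}\prod_{v}x_{\kappa(v)}$ over proper colorings $\kappa$ preserving $P$ (variables $x_i$, $i\in\mathbb{Z}$), and let $\mathbb{Y}$ be the $\mathbb{Q}$-span of all $Y_P$, over all signed posets $P$ of all signed graphs. *)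

(* Defs.v *)
From HB Require Import structures.
From mathcomp Require Import all_boot all_order all_algebra.
Set Implicit Arguments. Unset Strict Implicit. Unset Printing Implicit Defensive.
Import Order.TTheory GRing.Theory Num.Theory.
Local Open Scope ring_scope.

(* A signed graph: vertices 'I_nv, edges 'I_ne (loops and multiple edges
   allowed), each edge e has an ordered pair of endpoints ends e and a sign
   (true = +, false = -). *)
Record sgraph := SGraph {
  nv : nat;
  ne : nat;
  ends : 'I_ne -> 'I_nv * 'I_nv;
  sgn : 'I_ne -> bool }.

Definition sgnZ (G : sgraph) (e : 'I_(ne G)) : int := if sgn e then 1 else -1.

(* Half-edges of e are (e,false) (at (ends e).1) and (e,true) (at (ends e).2);
   a loop has two half-edges at the same vertex. *)
Definition hend (G : sgraph) (e : 'I_(ne G)) (b : bool) : 'I_(nv G) :=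
  if b then (ends e).2 else (ends e).1.

(* An arrow assignment: tau e b = true iff the arrow at half-edge (e,b)
   points toward its vertex hend e b. *)
Definition arrows (G : sgraph) := 'I_(ne G) -> bool -> bool.

Definition is_orientation (G : sgraph) (tau : arrows G) : Prop :=
  forall e : 'I_(ne G), (tau e false != tau e true) = sgn e.

Definition link (G : sgraph) (e : 'I_(ne G)) (u v : 'I_(nv G)) : bool :=
  (ends e == (u, v)) || (ends e == (v, u)).

Fixpoint is_walk (G : sgraph) (u : 'I_(nv G)) (w : seq ('I_(ne G) * 'I_(nv G))) : bool :=
  match w with
  | [::] => true
  | (e, v) :: w' => link e u v && is_walk v w'
  end.

Definition closed_walk (G : sgraph) (u : 'I_(nv G)) (w : seq ('I_(ne G) * 'I_(nv G))) : bool :=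
  [&& w != [::], is_walk u w & last u (map snd w) == u].

Definition is_cycle (G : sgraph) (tau : arrows G) (u : 'I_(nv G))
    (w : seq ('I_(ne G) * 'I_(nv G))) : Prop :=
  closed_walk u w /\
  forall x, x \in u :: map snd w ->
    (exists e b, [/\ e \in map fst w, hend e b = x & tau e b]) /\
    (exists e b, [/\ e \in map fst w, hend e b = x & ~~ tau e b]).

Definition acyclic (G : sgraph) (tau : arrows G) : Prop :=
  forall u w, ~ is_cycle tau u w.

Record signed_poset := SPoset {
  sp_graph : sgraph;
  sp_tau : arrows sp_graph;
  sp_orient : is_orientation sp_tau;
  sp_acyclic : acyclic sp_tau }.

Definition is_sink (G : sgraph) (tau : arrows G) (v : 'I_(nv G)) : bool :=
  [forall e, forall b, (hend e b == v) ==> tau e b].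

Definition nsinks (P : signed_poset) : nat :=
  #|[pred v | is_sink (@sp_tau P) v]|.

Definition proper (G : sgraph) (kap : 'I_(nv G) -> int) : bool :=
  [forall e, kap (ends e).1 != sgnZ e * kap (ends e).2].

Definition preserves (G : sgraph) (tau : arrows G) (kap : 'I_(nv G) -> int) : bool :=
  [forall e, forall b, tau e b == (sgnZ e * kap (hend e (~~ b)) < kap (hend e b))].

(* Formal power series in the variables x_i (i : int): a monomial is
   represented by a list of indices (with multiplicity, up to permutation),
   and a series by its coefficient function. *)
Definition monomial := seq int.
Definition series := monomial -> rat.

(* The number of proper colorings kap preserving P whose monomial
   prod_v x_{kap v} equals the monomial m (colorings with that monomial take
   values in m, so they are enumerated as finite functions into seq_sub m). *)
Definition Ycoef (P : signed_poset) (m : monomial) : nat :=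
  #|[pred k : {ffun 'I_(nv (sp_graph P)) -> seq_sub m} |
      let kap := fun v => ssval (k v) in
      [&& proper kap, preserves (@sp_tau P) kap &
          perm_eq [seq kap v | v <- enum 'I_(nv (sp_graph P))] m]]|.

Definition YP (P : signed_poset) : series := fun m => (Ycoef P m)%:R.

(* The Q-span of all Y_P. *)
Definition inY (f : series) : Prop :=
  exists s : seq (rat * signed_poset),
    f = fun m => \sum_(p <- s) p.1 * YP p.2 m.

(* Main.v *)
Require Import Defs.
From mathcomp Require Import all_boot all_order all_algebra.
From mathcomp Require Import zify ring.
From Stdlib Require Import ClassicalEpsilon.
Set Implicit Arguments. Unset Strict Implicit. Unset Printing Implicit Defensive.
Import Order.TTheory GRing.Theory Num.Theory.
Local Open Scope ring_scope.

Lemma sum_subset_split (T : finType) (R : nmodType) (F : {set T} -> R) (S : {set T}) (v : T) :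
  v \in S -> \sum_(B : {set T} | B \subset S) F B = \sum_(B : {set T} | B \subset S :\ v) (F B + F (v |: B)).
Proof.
move=> vS; rewrite big_split /=.
rewrite [LHS](bigID (fun B : {set T} => v \in B)) /= addrC; congr (_ + _).
  apply: eq_bigl => B; by rewrite subsetD1 andbC.
rewrite (reindex_onto (fun B => v |: B) (fun B => B :\ v)) /=; last first.
  by move=> B /andP[_ vB]; rewrite setD1K.
apply: eq_bigl => B. rewrite setU11 andbT subUset sub1set vS /= subsetD1.
case: (boolP (v \in B)) => vB; last by rewrite setU1K // eqxx.
rewrite !andbF; apply/andP => -[_ /eqP H].
by have := setD11 v (v |: B); rewrite H vB.
Qed.

Lemma sum_subset_pow (T : finType) (R : comPzRingType) (x : R) (S : {set T}) :
  \sum_(B : {set T} | B \subset S) x ^+ #|B| = (1 + x) ^+ #|S|.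
Proof.
move: {2}#|S| (erefl #|S|) => n; elim: n S => [|n IH] S.
  move/eqP; rewrite cards_eq0 => /eqP ->.
  rewrite (big_pred1 set0) ?cards0 ?expr0 // => B; by rewrite subset0.
move=> cS; have [v vS] : exists v, v \in S.
  by apply/set0Pn; rewrite -cards_eq0 cS.
rewrite (sum_subset_split _ vS).
have cS' : #|S :\ v| = n by move: cS; rewrite (cardsD1 v S) vS add1n => -[].
rewrite cS exprS -cS' -IH // mulrC big_distrl /=; apply: eq_bigr => B; rewrite subsetD1 => /andP[_ vB].
by rewrite cardsU1 vB add1n exprS mulrDr mulr1 mulrC.
Qed.

Lemma sum_subset_sign (T : finType) (R : comPzRingType) (S : {set T}) :
  \sum_(B : {set T} | B \subset S) (-1 : R) ^+ #|B| = (S == set0)%:R.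
Proof.
rewrite sum_subset_pow subrr expr0n -cards_eq0.
by case: (#|S| == 0)%N.
Qed.


Lemma sgn_pairs (T : finType) (Rg : comPzRingType) (S1 S2 : {set T}) :
  \sum_(P0 : {set T} | P0 \subset S1) \sum_(M0 : {set T} | M0 \subset S2)
     ([disjoint P0 & M0]%:R * (-1 : Rg) ^+ (#|P0| + #|M0|)) =
  \sum_(P0 : {set T} | P0 \subset S1) (-1 : Rg) ^+ #|P0| * (S2 \subset P0)%:R.
Proof.
apply: eq_bigr => P0 _.
rewrite (eq_bigr (fun M0 : {set T} => (-1 : Rg) ^+ #|P0| * (if [disjoint M0 & P0] then (-1 : Rg) ^+ #|M0| else 0))); last first.
  move=> M0 _; rewrite disjoint_sym exprD; case: ifP => _; by rewrite ?mul1r ?mul0r ?mulr0.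
rewrite -mulr_sumr -big_mkcondr /=; congr (_ * _).
rewrite (eq_bigl (fun M0 : {set T} => M0 \subset S2 :\: P0)); last by move=> M0; rewrite subsetD.
by rewrite sum_subset_sign setD_eq0.
Qed.

Lemma sgn_eq (T : finType) (Rg : comPzRingType) (S : {set T}) :
  \sum_(P0 : {set T} | P0 \subset S) (-1 : Rg) ^+ #|P0| * (S \subset P0)%:R = (-1) ^+ #|S|.
Proof.
rewrite (bigD1 S) //= big1 ?addr0 ?subxx ?mulr1 // => P0 /andP[sP nP].
by rewrite (_ : (S \subset P0) = false) ?mulr0 //; apply/negP => sS; case/negP: nP; rewrite eqEsubset sP sS.
Qed.

Lemma sgn_neq1 (T : finType) (Rg : comPzRingType) (S1 S2 : {set T}) v :
  v \in S1 -> v \notin S2 ->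
  \sum_(P0 : {set T} | P0 \subset S1) (-1 : Rg) ^+ #|P0| * (S2 \subset P0)%:R = 0.
Proof.
move=> v1 v2; rewrite (sum_subset_split _ v1) big1 // => B; rewrite subsetD1 => /andP[_ vB].
rewrite cardsU1 vB add1n exprS mulN1r mulNr.
have -> : (S2 \subset v |: B) = (S2 \subset B).
  have E : S2 :\: [set v] = S2 by apply/setDidPl; rewrite disjoint_sym disjoints1.
  by rewrite -subDset E.
by rewrite subrr.
Qed.

Lemma sgn_neq2 (T : finType) (Rg : comPzRingType) (S1 S2 : {set T}) v :
  v \notin S1 -> v \in S2 ->
  \sum_(P0 : {set T} | P0 \subset S1) (-1 : Rg) ^+ #|P0| * (S2 \subset P0)%:R = 0.
Proof.
move=> v1 v2; rewrite big1 // => B sB.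
rewrite (_ : (S2 \subset B) = false) ?mulr0 //; apply/negP => /subsetP /(_ v v2) vB.
by case/negP: v1; apply: (subsetP sB).
Qed.


Lemma sum_empty (T : finType) (Rg : pzRingType) (S1 S2 : {set T}) (X : {set T} -> {set T} -> Rg) :
  \sum_(P0 : {set T} | P0 \subset S1) \sum_(M0 : {set T} | M0 \subset S2)
     (((P0 == set0) && (M0 == set0))%:R * X P0 M0) = X set0 set0.
Proof.
rewrite (bigD1 set0) ?sub0set //= [X in _ + X]big1 ?addr0; last first.
  by move=> P0 /andP[_ /negbTE nP]; rewrite big1 // => M0 _; rewrite nP mul0r.
rewrite (bigD1 set0) ?sub0set //= [X in _ + X]big1 ?addr0 ?eqxx ?mul1r //.
by move=> M0 /andP[_ /negbTE nM]; rewrite nM mul0r.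
Qed.

Lemma disj_ne (T : finType) (Rg : pzRingType) (P0 M0 : {set T}) :
  ([disjoint P0 & M0]%:R - ((P0 == set0) && (M0 == set0))%:R : Rg) =
  ([disjoint P0 & M0] && (P0 :|: M0 != set0))%:R.
Proof.
rewrite -setU_eq0; case: (boolP (P0 :|: M0 == set0)) => /= h; last by rewrite andbT subr0.
move: h; rewrite setU_eq0 => /andP[/eqP -> /eqP ->].
by rewrite disjoints_subset sub0set subrr.
Qed.


Definition covm (k : nat) (m : seq int) := all (fun j => j \in [seq absz x | x <- m]) (iota 1 k).

Definition Wp (n : nat) (m : seq int) : {poly rat} :=
  \sum_(k < n.+1) (((all (fun x => (absz x <= k)%N) m && covm k m) : nat)%:R * (-1) ^+ (n + k))
  + \sum_(k < n.+1) ((([&& all (fun x => (absz x <= k)%N || (x == k.+1%:Z)) m, covm k m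
                          & k.+1%:Z \in m]) : nat)%:R
       * ((-1) ^+ (n - count_mem k.+1%:Z m + k) * ('X - 1) ^+ (count_mem k.+1%:Z m))).

Lemma covm_perm k m1 m2 : perm_eq m1 m2 -> covm k m1 = covm k m2.
Proof. by move=> h; apply: eq_all => j; rewrite (perm_mem (perm_map _ h)). Qed.

Lemma Wp_perm n m1 m2 : perm_eq m1 m2 -> Wp n m1 = Wp n m2.
Proof.
move=> h; rewrite /Wp; congr (_ + _); apply: eq_bigr => k _.
  by rewrite (perm_all _ h) (covm_perm k h).
by rewrite (perm_all _ h) (covm_perm k h) (perm_mem h) (permP h).
Qed.

Lemma sum_bool_card (T : finType) (P Q : pred T) :
  (\sum_(i | P i) (Q i : nat) = #|[pred i | P i && Q i]|)%N.
Proof.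
rewrite -sum1_card big_mkcondr /=; apply: eq_bigr => i _; by case: (Q i).
Qed.

Lemma count_map_card (T : finType) (f : T -> int) x :
  count_mem x [seq f v | v <- enum T] = #|[pred v | f v == x]|.
Proof. by rewrite count_map cardE size_filter enumT. Qed.

Lemma card_bij (T1 T2 : finType) (A : pred T1) (B : pred T2) (f : T1 -> T2) (g : T2 -> T1) :
  {in A, forall x, f x \in B} -> {in B, forall y, g y \in A} ->
  {in A, cancel f g} -> {in B, cancel g f} -> #|A| = #|B|.
Proof.
move=> fAB gBA fK gK; apply/eqP; rewrite eqn_leq; apply/andP; split.
  rewrite -(card_in_imset (f := f) (D := A)); last by move=> x y xA yA /(congr1 g); rewrite !fK.
  apply: subset_leq_card; apply/subsetP => y /imsetP[x xA ->]; exact: fAB.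
rewrite -(card_in_imset (f := g) (D := B)); last by move=> x y xA yA /(congr1 f); rewrite !gK.
apply: subset_leq_card; apply/subsetP => y /imsetP[x xA ->]; exact: gBA.
Qed.

Definition sZ (s : bool) : int := if s then 1 else -1.
Definition okE' (s t0 t1 : bool) (a b : int) : bool :=
  [&& a != sZ s * b, t0 == (sZ s * b < a) & t1 == (sZ s * a < b)].

Lemma okE_top (s t0 t1 : bool) (a b : int) (k : nat) :
  okE' s t0 t1 a b ->
  (`|a| <= k.+1)%R -> (`|b| <= k.+1)%R ->
  [/\ a = k.+1%:Z -> t0, b = k.+1%:Z -> t1, a = - k.+1%:Z -> ~~ t0 & b = - k.+1%:Z -> ~~ t1].
Proof.
rewrite /okE' /sZ; case: s t0 t1 => [] [] [] /=; rewrite ?mul1r ?mulN1r;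
 move=> H ha hb; split => E; move: H; rewrite E; lia.
Qed.

Lemma okE_build (s t0 t1 : bool) (a b : int) (k : nat) :
  (t0 != t1) = s ->
  [\/ (a = k.+1%:Z /\ t0), (a = - k.+1%:Z /\ ~~ t0) | (`|a| <= k)%R] ->
  [\/ (b = k.+1%:Z /\ t1), (b = - k.+1%:Z /\ ~~ t1) | (`|b| <= k)%R] ->
  ~ ((`|a| <= k)%R /\ (`|b| <= k)%R) ->
  okE' s t0 t1 a b.
Proof.
rewrite /okE' /sZ; case: s t0 t1 => [] [] [] //= _; rewrite ?mul1r ?mulN1r;
 case=> [[Ea Ht]|[Ea Ht]|Ea] // ; case=> [[Eb Hu]|[Eb Hu]|Eb] // ; lia.
Qed.

Section Walk.
Variable G : sgraph.
Variable tau : arrows G.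
Local Notation V := 'I_(nv G).
Local Notation E := 'I_(ne G).
Definition inR' (R : {set V}) (e : E) := ((ends e).1 \in R) && ((ends e).2 \in R).

Lemma link_hend (e : E) b : link e (hend e b) (hend e (~~ b)).
Proof. by rewrite /link /hend; case: b; rewrite -surjective_pairing eqxx ?orbT. Qed.

Lemma link_sym (e : E) u v : link e u v = link e v u.
Proof. by rewrite /link orbC. Qed.

Lemma link_end (e : E) u v : link e u v -> exists b, hend e b = v.
Proof.
rewrite /link => /orP[] /eqP E.
  by exists true; rewrite /hend E.
by exists false; rewrite /hend E.
Qed.

Lemma link_end1 (e : E) u v : link e u v -> exists b, hend e b = u.
Proof. rewrite link_sym; exact: link_end. Qed.

Lemma is_walk_cat (u : V) w1 w2 :
  is_walk u (w1 ++ w2) = is_walk u w1 && is_walk (last u (map snd w1)) w2.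
Proof.
elim: w1 u => [|[e v] w1 IH] u //=; by rewrite IH andbA.
Qed.

Lemma split_snd (w : seq (E * V)) z : z \in map snd w ->
  exists w1 e w2, w = w1 ++ (e, z) :: w2.
Proof.
elim: w => [|[e v] w IH] //=; rewrite inE => /orP[/eqP ->|].
  by exists [::], e, w.
by case/IH => w1 [e' [w2 ->]]; exists ((e, v) :: w1), e', w2.
Qed.

Lemma walk_vertex (u : V) w x : is_walk u w -> w != [::] -> x \in u :: map snd w ->
  exists e b, e \in map fst w /\ hend e b = x.
Proof.
elim: w u => [|[e v] w IH] u //= /andP[l wk] _; rewrite inE => /orP[/eqP ->|].
  by case: (link_end1 l) => b hb; exists e, b; rewrite inE eqxx.
rewrite inE => /orP[/eqP ->|xin].
  by case: (link_end l) => b hb; exists e, b; rewrite inE eqxx.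
have wn : w != [::] by case: w wk xin {IH}.
case: (IH v wk wn); first by rewrite inE xin orbT.
by move=> e' [b [h1 h2]]; exists e', b; rewrite inE h1 orbT.
Qed.

Definition edges (w : seq (E * V)) := [set e | e \in map fst w].

Definition winv R (u : V) w := closed_walk u w && all (fun p => inR' R p.1) w.

Lemma splice R u w (e : E) b : winv R u w -> inR' R e -> hend e b \in u :: map snd w ->
  exists w', winv R u w' /\ edges w' = e |: edges w.
Proof.
case/andP => /and3P[wn wk lw] wa eR.
set z := hend e b; set y := hend e (~~ b).
have l1 : link e z y := link_hend e b.
have l2 : link e y z by rewrite link_sym.
rewrite inE => /orP[/eqP zu|].
  exists ((e, y) :: (e, u) :: w); split.
    rewrite zu in l1 l2.
    by rewrite /winv /closed_walk /= l1 l2 wk /= eR wa lw.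
  by apply/setP => x; rewrite !inE /= orbA orbb.
case/split_snd => w1 [e0 [w2 Ew]].
exists (w1 ++ (e0, z) :: (e, y) :: (e, z) :: w2); split.
  move: wk wa lw; rewrite Ew /winv /closed_walk !is_walk_cat /= !all_cat /=.
  rewrite l1 l2 eR !map_cat !last_cat /=.
  by case/andP => -> /andP[-> ->] /andP[-> /andP[-> ->]] ->; case: (w1).
apply/setP => x; rewrite Ew !inE !map_cat !mem_cat /= !inE.
by case: (x == e); case: (x == e0); rewrite ?orbT ?orbF.
Qed.

Lemma cycle_of R :
  (forall v e b, inR' R e -> hend e b = v ->
    (exists e' b', [/\ inR' R e', hend e' b' = v & tau e' b']) /\
    (exists e' b', [/\ inR' R e', hend e' b' = v & ~~ tau e' b'])) ->
  forall e0, inR' R e0 -> exists u w, is_cycle tau u w.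
Proof.
move=> H e0 e0R.
have step : forall u w, winv R u w -> (exists u w, is_cycle tau u w) \/
    exists w', winv R u w' /\ #|edges w'| = #|edges w|.+1.
  move=> u w hw.
  case: (pickP [pred eb : E * bool | inR' R eb.1 && (hend eb.1 eb.2 \in u :: map snd w)
                                     && (eb.1 \notin map fst w)]) => [[e b]|none].
    rewrite /= => /andP[/andP[eR hin] enot].
    right; case: (splice hw eR hin) => w' [hw' Ew']; exists w'; split => //.
    by rewrite Ew' cardsU1 inE enot.
  left; exists u, w; case/andP: hw => cw wa; split => // x xin.
  case/and3P: (cw) => wn wk _.
  case: (walk_vertex wk wn xin) => e [b [ein hb]].
  have eR : inR' R e by case/mapP: ein => p pin ->; exact: (allP wa p pin).
  have [[e1 [b1 [r1 h1 t1]]] [e2 [b2 [r2 h2 t2]]]] := H x e b eR hb.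
  split.
    exists e1, b1; split => //; have := none (e1, b1); rewrite /= r1 h1 xin /=.
    by move/negbT; rewrite negbK.
  exists e2, b2; split => //; have := none (e2, b2); rewrite /= r2 h2 xin /=.
  by move/negbT; rewrite negbK.
suff: forall n u w, winv R u w -> (ne G - #|edges w| <= n)%N -> exists u w, is_cycle tau u w.
  move=> /(_ (ne G) (ends e0).1 [:: (e0, (ends e0).2); (e0, (ends e0).1)]); apply; last exact: leq_subr.
  rewrite /winv /closed_walk /= /link -surjective_pairing eqxx /= e0R.
  by case: (ends e0) e0R => a b /= _; rewrite eqxx orbT.
elim=> [|n IH] u w hw hn; case: (step u w hw) => // -[w' [hw' cw']].
  have := max_card (mem (edges w')); rewrite card_ord cw'.
  by move: hn; rewrite leqn0 subn_eq0 => h1 h2; have := leq_trans h2 h1; rewrite ltnn.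
apply: (IH u w' hw'); rewrite cw' subnS; move: hn; case: (ne G - #|edges w|)%N => //.
Qed.
End Walk.

Section Comb.
Variable G : sgraph.
Variable tau : arrows G.
Local Notation V := 'I_(nv G).
Local Notation E := 'I_(ne G).

Definition NN := (nv G).+1.
Definition col := 'I_(NN.*2.+1).
Definition valc (c : col) : int := (c : nat)%:Z - NN%:Z.
Definition colof (x : int) : col := inord (absz (x + NN%:Z)).

Lemma valcK x : (absz x <= NN)%N -> valc (colof x) = x.
Proof.
move=> h; rewrite /valc /colof inordK; last by lia.
have -> : ((absz (x + NN%:Z))%:Z = x + NN%:Z) by lia.
by rewrite addrK.
Qed.

Lemma colofK c : colof (valc c) = c.
Proof.
apply: val_inj; rewrite /= /colof /valc inordK subrK //.
by have := ltn_ord c.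
Qed.

Lemma valc_bnd c : (absz (valc c) <= NN)%N.
Proof. rewrite /valc; have := ltn_ord c; lia. Qed.


Local Notation inR := (@inR' G).
Definition sinkR (R : {set V}) (v : V) := [forall e, forall b, (inR R e && (hend e b == v)) ==> tau e b].
Definition srcR (R : {set V}) (v : V) := [forall e, forall b, (inR R e && (hend e b == v)) ==> ~~ tau e b].
Definition Sk (R : {set V}) := [set v in R | sinkR R v].
Definition So (R : {set V}) := [set v in R | srcR R v].
Definition okE (kap : V -> int) (e : E) :=
  okE' (sgn e) (tau e false) (tau e true) (kap (ends e).1) (kap (ends e).2).
Definition valid (R : {set V}) (kap : V -> int) := [forall e, inR R e ==> okE kap e].

Definition kp (ka : {ffun V -> col}) : V -> int := fun v => valc (ka v).
Definition normal (R : {set V}) (ka : {ffun V -> col}) := [forall v, (v \notin R) ==> (kp ka v == 0)].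
Definition bnd (R : {set V}) (k : nat) (ka : {ffun V -> col}) := [forall v in R, (absz (kp ka v) <= k)%N].
Definition cov (R : {set V}) (k : nat) (ka : {ffun V -> col}) := all (fun j => [exists v in R, absz (kp ka v) == j]) (iota 1 k).
Definition Cset (R : {set V}) (k : nat) := [pred ka : {ffun V -> col} |
   [&& normal R ka, valid R (kp ka), bnd R k ka & cov R k ka]].
Definition Dset (R : {set V}) (k : nat) := [pred ka : {ffun V -> col} |
   [&& normal R ka, valid R (kp ka), bnd R k.+1 ka & cov R k ka]].
Definition Bp (R : {set V}) (k : nat) (ka : {ffun V -> col}) := [set v in R | kp ka v == k.+1%:Z].
Definition Bm (R : {set V}) (k : nat) (ka : {ffun V -> col}) := [set v in R | kp ka v == - k.+1%:Z].

Lemma hendE (e : E) (b : bool) : hend e b = if b then (ends e).2 else (ends e).1.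
Proof. by []. Qed.

Lemma inR_hend (R : {set V}) (e : E) (b : bool) : inR R e -> hend e b \in R.
Proof. by case/andP; case: b. Qed.

Lemma okE_eq (k1 k2 : V -> int) (e : E) : k1 (ends e).1 = k2 (ends e).1 -> k1 (ends e).2 = k2 (ends e).2 ->
  okE k1 e = okE k2 e.
Proof. by rewrite /okE => -> ->. Qed.

Lemma bndP (R' : {set V}) (k' : nat) (ka : {ffun V -> col}) (v : V) : bnd R' k' ka -> v \in R' -> (`|kp ka v| <= k'%:Z)%R.
Proof. move=> /forallP /(_ v) /implyP h /h; lia. Qed.

Section Fiber.
Variables (R : {set V}) (k : nat) (P0 M0 : {set V}).
Hypothesis hk : (k < NN)%N.

Let B := P0 :|: M0.
Definition gmap (ka : {ffun V -> col}) : {ffun V -> col} :=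
  [ffun v => if v \in B then colof 0 else ka v].
Definition hmap (ka : {ffun V -> col}) : {ffun V -> col} :=
  [ffun v => if v \in P0 then colof k.+1%:Z else if v \in M0 then colof (- k.+1%:Z) else ka v].



Lemma fiber_cond (ka : {ffun V -> col}) : Dset R k ka -> Bp R k ka = P0 -> Bm R k ka = M0 ->
  [&& P0 \subset Sk R, M0 \subset So R & [disjoint P0 & M0]].
Proof.
case/and4P => nka vka bka cka EP EM; apply/and3P; split.
- apply/subsetP => v; rewrite -EP !inE => /andP[vR /eqP kv]; rewrite vR /=.
  apply/forallP => e; apply/forallP => b; apply/implyP => /andP[eR /eqP hv].
  have ok := implyP (forallP vka e) eR.
  have [e1 e2] := andP eR.
  have [a1 a2 _ _] := okE_top ok (bndP bka e1) (bndP bka e2).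
  by move: hv; case: b => /= hv; [apply: a2 | apply: a1]; rewrite hv.
- apply/subsetP => v; rewrite -EM !inE => /andP[vR /eqP kv]; rewrite vR /=.
  apply/forallP => e; apply/forallP => b; apply/implyP => /andP[eR /eqP hv].
  have ok := implyP (forallP vka e) eR.
  have [e1 e2] := andP eR.
  have [_ _ a1 a2] := okE_top ok (bndP bka e1) (bndP bka e2).
  by move: hv; case: b => /= hv; [apply: a2 | apply: a1]; rewrite hv.
- rewrite -EP -EM; apply/pred0P => v /=; rewrite !inE.
  case: (v \in R) => //=; apply/negP => /andP[/eqP -> ]; clear; lia.
Qed.

Hypothesis Hor : is_orientation tau.
Hypothesis cond : [&& P0 \subset Sk R, M0 \subset So R & [disjoint P0 & M0]].

Lemma kpK (ka : {ffun V -> col}) v x : kp ka v = x -> ka v = colof x.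
Proof. by rewrite /kp => <-; rewrite colofK. Qed.

Lemma kp_g ka v : kp (gmap ka) v = if v \in B then 0 else kp ka v.
Proof. by rewrite /kp ffunE; case: ifP => // _; rewrite valcK. Qed.

Lemma kp_h ka v : kp (hmap ka) v =
  if v \in P0 then k.+1%:Z else if v \in M0 then - k.+1%:Z else kp ka v.
Proof.
rewrite /kp ffunE; case: ifP => _; first by rewrite valcK //; lia.
by case: ifP => _ //; rewrite valcK //; lia.
Qed.

Lemma P0R : P0 \subset R.
Proof.
case/and3P: cond => /subsetP h _ _; apply/subsetP => v /h; rewrite inE; by case/andP.
Qed.
Lemma M0R : M0 \subset R.
Proof.
case/and3P: cond => _ /subsetP h _; apply/subsetP => v /h; rewrite inE; by case/andP.
Qed.

Lemma fiber_card :
  #|[pred ka | Dset R k ka && (Bp R k ka == P0) && (Bm R k ka == M0)]| = #|Cset (R :\: B) k|.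
Proof.
have [sP sM dPM] := and3P cond.
have PR := subsetP P0R; have MR := subsetP M0R.
apply: (@card_bij _ _ _ _ gmap hmap).
- move=> ka; rewrite inE => /andP[/andP[D /eqP EP] /eqP EM].
  case/and4P: (D) => nka vka bka cka.
  have inB v : v \in R -> (v \in B) = (`|kp ka v| == k.+1%:Z).
    move=> vR; rewrite /B -EP -EM !inE vR /=.
    have := bndP bka vR; move: (kp ka v) => x; clear; lia.
  rewrite inE; apply/and4P; split.
  + apply/forallP => v; apply/implyP; rewrite kp_g in_setD negb_and negbK.
    case: ifP => // vB /= vR; exact: (implyP (forallP nka v) vR).
  + apply/forallP => e; apply/implyP => /andP[]; rewrite !in_setD => /andP[n1 r1] /andP[n2 r2].
    rewrite (@okE_eq _ (kp ka)); last 2 first.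
      by rewrite kp_g (negbTE n1). by rewrite kp_g (negbTE n2).
    by apply: (implyP (forallP vka e)); rewrite /inR' r1 r2.
  + apply/forallP => v; apply/implyP; rewrite !in_setD => /andP[vnB vR].
    rewrite kp_g (negbTE vnB); move: vnB; rewrite inB //.
    have := bndP bka vR; move: (kp ka v) => x; clear; lia.
  + apply/allP => j jin; have /existsP[v /andP[vR /eqP vj]] := allP cka j jin.
    move: jin; rewrite mem_iota => /andP[j1 j2].
    have vnB : v \notin B by rewrite inB //; move: vj j1 j2; move: (kp ka v) => x; clear; lia.
    apply/existsP; exists v; rewrite !in_setD vnB vR kp_g (negbTE vnB) vj eqxx.
    done.
- move=> ka; rewrite inE => /and4P[nka vka bka cka].
  have outB v : v \notin B -> v \in R -> v \in R :\: B by rewrite in_setD => -> ->.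
  rewrite inE -andbA; apply/and3P; split.
  + apply/and4P; split.
    * apply/forallP => v; apply/implyP => vnR; rewrite kp_h.
      have -> : (v \in P0) = false by apply/negP => /PR; rewrite (negbTE vnR).
      have -> : (v \in M0) = false by apply/negP => /MR; rewrite (negbTE vnR).
      by apply: (implyP (forallP nka v)); rewrite in_setD negb_and vnR orbT.
    * apply/forallP => e; apply/implyP => eR.
      have disj (b : bool) : [\/ kp (hmap ka) (hend e b) = k.+1%:Z /\ tau e b,
          kp (hmap ka) (hend e b) = - k.+1%:Z /\ ~~ tau e b | (`|kp (hmap ka) (hend e b)| <= k%:Z)%R].
        have xR := inR_hend b eR; rewrite kp_h; case: ifP => xP.
          apply: Or31; split => //; have := subsetP sP _ xP; rewrite inE.
          by case/andP => _ /forallP /(_ e) /forallP /(_ b) /implyP; apply; rewrite eR eqxx.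
        case: ifP => xM.
          apply: Or32; split => //; have := subsetP sM _ xM; rewrite inE.
          by case/andP => _ /forallP /(_ e) /forallP /(_ b) /implyP; apply; rewrite eR eqxx.
        apply: Or33; have xnB : hend e b \notin B by rewrite /B !inE xP xM.
        exact: bndP bka (outB _ xnB xR).
      have inBv x : x \in B -> `|kp (hmap ka) x| = k.+1%:Z.
        rewrite kp_h /B !inE; case: ifP => _; first by clear; lia.
        by case: ifP => //= _ _; clear; lia.
      case: (boolP (((ends e).1 \in B) || ((ends e).2 \in B))) => hB; last first.
        move: hB; rewrite negb_or => /andP[n1 n2].
        rewrite (@okE_eq _ (kp ka)).
        - apply: (implyP (forallP vka e)); rewrite /inR' !in_setD n1 n2.
          by case/andP: eR => -> ->.
        - by rewrite kp_h; move: n1; rewrite /B !inE negb_or => /andP[/negbTE -> /negbTE ->].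
        - by rewrite kp_h; move: n2; rewrite /B !inE negb_or => /andP[/negbTE -> /negbTE ->].
      apply: (okE_build (Hor e) (disj false) (disj true)).
      by move=> [h1 h2]; case/orP: hB => /inBv xB; [move: h1 | move: h2]; rewrite xB; clear; lia.
    * apply/forallP => v; apply/implyP => vR; rewrite kp_h.
      case: ifP => vP; first by clear; lia.
      case: ifP => vM; first by clear; lia.
      have vnB : v \notin B by rewrite /B !inE vP vM.
      have := bndP bka (outB v vnB vR); move: (kp ka v) => x; clear; lia.
    * apply/allP => j jin; have /existsP[v /andP[vR' /eqP vj]] := allP cka j jin.
      move: vR'; rewrite in_setD => /andP[vnB vR].
      apply/existsP; exists v; rewrite vR /= kp_h.
      by move: vnB; rewrite /B !inE negb_or => /andP[/negbTE -> /negbTE ->]; rewrite vj.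
  + apply/eqP/setP => v; rewrite !inE kp_h.
    case: ifP => vP; first by rewrite (PR v vP) eqxx.
    case: ifP => vM; first by rewrite (MR v vM) /=; clear; lia.
    case: (boolP (v \in R)) => //= vR.
    have vnB : v \notin B by rewrite /B !inE vP vM.
    have := bndP bka (outB v vnB vR); move: (kp ka v) => x; clear; lia.
  + apply/eqP/setP => v; rewrite !inE kp_h.
    case: ifP => vP; first by rewrite (PR v vP) (disjointFr dPM vP); clear; lia.
    case: ifP => vM //=; first by rewrite (MR v vM) /= eqxx.
    case: (boolP (v \in R)) => //= vR.
    have vnB : v \notin B by rewrite /B !inE vP vM.
    have := bndP bka (outB v vnB vR); move: (kp ka v) => x; clear; lia.
- move=> ka; rewrite inE => /andP[/andP[D /eqP EP] /eqP EM].
  apply/ffunP => v; rewrite !ffunE.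
  case: ifP => vP.
    by symmetry; apply: kpK; move: vP; rewrite -EP inE => /andP[_ /eqP].
  case: ifP => vM.
    by symmetry; apply: kpK; move: vM; rewrite -EM inE => /andP[_ /eqP].
  by rewrite /B !inE vP vM.
- move=> ka; rewrite inE => /and4P[nka _ _ _]; apply/ffunP => v; rewrite !ffunE.
  case: ifP => vB.
    by symmetry; apply: kpK; have := implyP (forallP nka v); rewrite in_setD vB => /(_ isT) /eqP.
  by move: vB; rewrite /B !inE => /negbT; rewrite negb_or => /andP[/negbTE -> /negbTE ->].
Qed.
End Fiber.
Section Part5.
Hypothesis Hor : is_orientation tau.

Definition Ck (R : {set V}) (k : nat) := #|Cset R k|.

Lemma Ck_big (R : {set V}) (k : nat) : (#|R| < k)%N -> Ck R k = 0%N.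
Proof.
move=> hk; apply: eq_card0 => ka; apply/negP => /and4P[_ _ _ cka].
have sub : {subset iota 1 k <= [seq absz (kp ka v) | v <- enum R]}.
  move=> j /(allP cka) /existsP[v /andP[vR /eqP <-]]; apply: map_f; by rewrite mem_enum.
have := uniq_leq_size (iota_uniq 1 k) sub; rewrite size_iota size_map -cardE.
by rewrite leqNgt hk.
Qed.

Lemma Ck0 (R : {set V}) : Ck R 0 = if [exists e, inR R e] then 0%N else 1%N.
Proof.
set ka0 : {ffun V -> col} := [ffun => colof 0].
have kp0 v : kp ka0 v = 0 by rewrite /kp ffunE valcK.
have zero ka : Cset R 0 ka -> ka = ka0.
  case/and4P => nka _ bka _; apply/ffunP => v; rewrite [RHS]ffunE; apply: kpK.
  case: (boolP (v \in R)) => vR.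
    by have := bndP bka vR; move: (kp ka v) => x; clear; lia.
  by apply/eqP: (implyP (forallP nka v) vR).
case: ifP => [/existsP[e eR]|ne].
  apply: eq_card0 => ka; apply/negP => C; have E := zero ka C.
  case/and4P: C => _ vka _ _; have := implyP (forallP vka e) eR.
  by rewrite E /okE /okE' !kp0 mulr0 eqxx.
rewrite /Ck (@eq_card _ _ (pred1 ka0)) ?card1 // => ka.
apply/idP/eqP => [/zero //|->].
rewrite inE; apply/and4P; split.
- apply/forallP => v; apply/implyP => _; by rewrite kp0.
- apply/forallP => e; apply/implyP => eR; by move/negbT: ne => /existsPn /(_ e); rewrite eR.
- apply/forallP => v; apply/implyP => _; by rewrite kp0.
- by [].
Qed.

Lemma sum_Dset (Rg : nmodType) (R : {set V}) (k : nat) (F : {set V} -> {set V} -> Rg) : (k < NN)%N ->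
  \sum_(ka in Dset R k) F (Bp R k ka) (Bm R k ka) =
  \sum_(P0 : {set V}) \sum_(M0 : {set V}) F P0 M0 *+
     (if [&& P0 \subset Sk R, M0 \subset So R & [disjoint P0 & M0]]
      then Ck (R :\: (P0 :|: M0)) k else 0%N).
Proof.
move=> hk.
transitivity (\sum_(ka in Dset R k) \sum_(P0 : {set V}) \sum_(M0 : {set V})
    (if (Bp R k ka == P0) && (Bm R k ka == M0) then F P0 M0 else 0)).
  have one (X : {set V} -> Rg) (S : {set V}) :
      \sum_(P0 : {set V}) (if S == P0 then X P0 else 0) = X S.
    by rewrite -big_mkcond /= (big_pred1 S) // => P; rewrite eq_sym.
  apply: eq_bigr => ka _.
  rewrite (eq_bigr (fun P0 => if Bp R k ka == P0 then F P0 (Bm R k ka) else 0)) ?one // => P0 _.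
  by case: eqP => _ /=; [rewrite (one (F P0)) | rewrite big1].
rewrite exchange_big; apply: eq_bigr => P0 _; rewrite exchange_big; apply: eq_bigr => M0 _.
rewrite -big_mkcondr /=.
rewrite (eq_bigl (mem [pred ka | Dset R k ka && (Bp R k ka == P0) && (Bm R k ka == M0)]));
  last by move=> ka; rewrite !inE andbA.
rewrite sumr_const; congr (_ *+ _).
case: ifP => c; first exact: fiber_card.
apply: eq_card0 => ka; apply/negP; rewrite inE => /andP[/andP[D /eqP EP] /eqP EM].
by rewrite (fiber_cond D EP EM) in c.
Qed.

Lemma Cset_succE (R : {set V}) (k : nat) ka :
  (ka \in Cset R k.+1) = (ka \in Dset R k) && (Bp R k ka :|: Bm R k ka != set0).
Proof.
have ex_eq : [exists v in R, absz (kp ka v) == k.+1] = (Bp R k ka :|: Bm R k ka != set0).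
  apply/existsP/set0Pn => [[v /andP[vR /eqP h]]|[v]].
    exists v; rewrite !inE vR /=; move: h; move: (kp ka v) => x; clear; lia.
  rewrite !inE => /orP[] /andP[vR /eqP h]; exists v; rewrite vR h /=; clear; lia.
by rewrite !inE /= /cov -addn1 iotaD all_cat /= andbT add1n -/(cov R k ka) ex_eq !andbA.
Qed.

Lemma Ck_succ (Rg : pzRingType) (R : {set V}) (k : nat) : (k < NN)%N ->
  ((Ck R k.+1)%:R : Rg) = \sum_(P0 : {set V} | P0 \subset Sk R) \sum_(M0 : {set V} | M0 \subset So R)
     (([disjoint P0 & M0] && (P0 :|: M0 != set0))%:R * (Ck (R :\: (P0 :|: M0)) k)%:R).
Proof.
move=> hk.
have -> : Ck R k.+1 = (\sum_(ka in Dset R k) ((Bp R k ka :|: Bm R k ka != set0) : nat))%N.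
  transitivity (\sum_(ka | (ka \in Dset R k) && (Bp R k ka :|: Bm R k ka != set0)) 1)%N.
    by rewrite sum1_card; apply: eq_card => ka; rewrite Cset_succE.
  by rewrite big_mkcondr /=; apply: eq_bigr => ka _; case: ifP.
rewrite natr_sum (@sum_Dset Rg R k (fun P0 M0 => (((P0 :|: M0 != set0) : nat)%:R : Rg)) hk).
rewrite [RHS]big_mkcond; apply: eq_bigr => P0 _.
case: (boolP (P0 \subset Sk R)) => sP /=; last first.
  by rewrite big1 // => M0 _; rewrite (negbTE sP) mulr0n.
rewrite [RHS]big_mkcond /=; apply: eq_bigr => M0 _.
case: (boolP (M0 \subset So R)) => sM /=; last by rewrite mulr0n.
rewrite mulr_natr; case: ([disjoint P0 & M0]) => //=.
by rewrite mulr0n mul0rn.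
Qed.

Lemma Sk_noedge (R : {set V}) : ~~ [exists e, inR R e] -> Sk R = R /\ So R = R.
Proof.
move/existsPn => ne; split; apply/setP => v; rewrite !inE; case: (v \in R) => //=;
  apply/forallP => e; apply/forallP => b; by rewrite (negbTE (ne e)).
Qed.

Lemma SkSo (R : {set V}) (e0 : E) : acyclic tau -> inR R e0 -> Sk R != So R.
Proof.
move=> Hac e0R; apply/negP => /eqP ES.
have [u [w C]] : exists u w, is_cycle tau u w; last exact: (Hac u w C).
apply: (cycle_of _ e0R) => v e b eR hb.
have vR : v \in R by rewrite -hb; exact: inR_hend.
split.
  case: (boolP [exists e', exists b', [&& inR R e', hend e' b' == v & tau e' b']]).
    by case/existsP => e' /existsP[b' /and3P[r /eqP h t]]; exists e', b'.
  move/existsPn => H.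
  have : v \in So R.
    rewrite inE vR /=; apply/forallP => e'; apply/forallP => b'; apply/implyP => /andP[r h].
    by move/existsPn: (H e') => /(_ b'); rewrite r h.
  rewrite -ES inE => /andP[_ /forallP /(_ e) /forallP /(_ b) /implyP]; rewrite eR hb eqxx => /(_ isT) t.
  by move/existsPn: (H e) => /(_ b); rewrite eR hb eqxx t.
case: (boolP [exists e', exists b', [&& inR R e', hend e' b' == v & ~~ tau e' b']]).
  by case/existsP => e' /existsP[b' /and3P[r /eqP h t]]; exists e', b'.
move/existsPn => H.
have : v \in Sk R.
  rewrite inE vR /=; apply/forallP => e'; apply/forallP => b'; apply/implyP => /andP[r h].
  by move/existsPn: (H e') => /(_ b'); rewrite r h negbK.
rewrite ES inE => /andP[_ /forallP /(_ e) /forallP /(_ b) /implyP]; rewrite eR hb eqxx => /(_ isT) t.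
by move/existsPn: (H e) => /(_ b); rewrite eR hb eqxx t.
Qed.

Definition fR (Rg : pzRingType) (R : {set V}) : Rg :=
  \sum_(k < (nv G).+1) (-1) ^+ (#|R| + k) * (Ck R k)%:R.

Lemma fR_trunc (Rg : pzRingType) (R : {set V}) : (#|R| < nv G)%N ->
  \sum_(k < nv G) (-1) ^+ (#|R| + k) * ((Ck R k)%:R : Rg) = fR Rg R.
Proof. by move=> h; rewrite /fR big_ord_recr /= Ck_big // mulr0 addr0. Qed.

Lemma fR_step (Rg : comPzRingType) (Hac : acyclic tau) (R : {set V}) :
  (forall R' : {set V}, (#|R'| < #|R|)%N -> fR Rg R' = 1) -> fR Rg R = 1.
Proof.
move=> IH.
have cR : (#|R| <= nv G)%N by rewrite -[X in (_ <= X)%N]card_ord max_card.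
rewrite /fR big_ord_recl /= addn0.
rewrite (eq_bigr (fun i : 'I_(nv G) => \sum_(P0 : {set V} | P0 \subset Sk R)
     \sum_(M0 : {set V} | M0 \subset So R)
     (([disjoint P0 & M0] && (P0 :|: M0 != set0))%:R *
      ((-1) ^+ (#|R| + i.+1) * (Ck (R :\: (P0 :|: M0)) i)%:R)))); last first.
  move=> i _; rewrite (_ : bump 0 i = i.+1) // (Ck_succ Rg); last by rewrite /NN ltnS ltnW.
  rewrite mulr_sumr; apply: eq_bigr => P0 _; rewrite mulr_sumr; apply: eq_bigr => M0 _.
  by rewrite mulrCA.
rewrite exchange_big /=.
rewrite (eq_bigr (fun P0 : {set V} => \sum_(M0 : {set V} | M0 \subset So R)
     (([disjoint P0 & M0]%:R - ((P0 == set0) && (M0 == set0))%:R) *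
      (- (-1) ^+ (#|P0| + #|M0|))))); last first.
  move=> P0 sP; rewrite exchange_big /=; apply: eq_bigr => M0 sM.
  rewrite -mulr_sumr disj_ne.
  case: (boolP ([disjoint P0 & M0] && (P0 :|: M0 != set0))) => [c|_]; last by rewrite !mul0r.
  rewrite !mul1r; case/andP: c => dPM ne.
  set B := P0 :|: M0.
  have SkR : Sk R \subset R by apply/subsetP => v; rewrite inE => /andP[].
  have SoR : So R \subset R by apply/subsetP => v; rewrite inE => /andP[].
  have BR : B \subset R by rewrite subUset (subset_trans sP SkR) (subset_trans sM SoR).
  have cB : #|B| = (#|P0| + #|M0|)%N by rewrite cardsU (disjoint_setI0 dPM) cards0 subn0.
  have cRB : (#|R :\: B| + #|B| = #|R|)%N by rewrite -(cardsID B R) (setIidPr BR) addnC.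
  have Bpos : (0 < #|B|)%N by rewrite card_gt0.
  have lt : (#|R :\: B| < #|R|)%N.
    by move: cRB Bpos; move: #|R :\: B| #|B| #|R| => x y z; clear; lia.
  transitivity (- (-1) ^+ (#|P0| + #|M0|) * fR Rg (R :\: B)); last by rewrite IH // mulr1.
  rewrite -fR_trunc; last exact: leq_trans lt cR.
  rewrite mulr_sumr; apply: eq_bigr => i _; rewrite mulrA; congr (_ * _).
  rewrite -cB -cRB addnS exprS !exprD; ring.
rewrite (eq_bigr (fun P0 : {set V} => \sum_(M0 : {set V} | M0 \subset So R)
     ((((P0 == set0) && (M0 == set0))%:R * (-1) ^+ (#|P0| + #|M0|)) -
       [disjoint P0 & M0]%:R * (-1) ^+ (#|P0| + #|M0|)))); last first.
  by move=> P0 _; apply: eq_bigr => M0 _; ring.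
under eq_bigr => P0 _ do rewrite sumrB.
rewrite sumrB sum_empty sgn_pairs !cards0 addn0 expr0.
rewrite Ck0; case: ifP => [/existsP[e eR]|ne].
  rewrite mulr0n mulr0 add0r.
  have := SkSo Hac eR; rewrite eqEsubset negb_and => /orP[] /subsetPn[v v1 v2].
    by rewrite (sgn_neq1 _ v1 v2) subr0.
  by rewrite (sgn_neq2 _ v2 v1) subr0.
have [E1 E2] := Sk_noedge (negbT ne); rewrite E1 E2 sgn_eq mulr1n mulr1.
by rewrite addrC subrK.
Qed.

Theorem fR1 (Rg : comPzRingType) (Hac : acyclic tau) (R : {set V}) : fR Rg R = 1.
Proof.
suff H : forall n (R : {set V}), (#|R| <= n)%N -> fR Rg R = 1 by exact: H _ R (leqnn _).
elim=> [|n IH] R0 hR; apply: fR_step => // R' hR'.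
  by have := leq_trans hR' hR.
by apply: IH; rewrite -ltnS; exact: leq_trans hR' hR.
Qed.


Lemma normalT ka : normal setT ka.
Proof. by apply/forallP => v; rewrite in_setT. Qed.

Lemma allE (p : int -> bool) ka :
  all p [seq kp ka v | v <- enum V] = [forall v, p (kp ka v)].
Proof.
rewrite all_map; apply/allP/forallP => [H v|H v _]; last exact: H.
by apply: H; rewrite mem_enum.
Qed.

Lemma covE k ka : covm k [seq kp ka v | v <- enum V] = cov setT k ka.
Proof.
apply: eq_all => j; rewrite -map_comp.
apply/mapP/existsP => [[v _ ->]|[v /andP[_ /eqP <-]]].
  by exists v; rewrite in_setT eqxx.
by exists v; rewrite ?mem_enum.
Qed.

Lemma c1E k ka : (all (fun x => (absz x <= k)%N) [seq kp ka v | v <- enum V] &&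
   covm k [seq kp ka v | v <- enum V]) = bnd setT k ka && cov setT k ka.
Proof.
rewrite covE; congr (_ && _).
rewrite allE; apply: eq_forallb => v; by rewrite in_setT.
Qed.

Lemma c2E k ka : [&& all (fun x => (absz x <= k)%N || (x == k.+1%:Z)) [seq kp ka v | v <- enum V],
   covm k [seq kp ka v | v <- enum V] & k.+1%:Z \in [seq kp ka v | v <- enum V]] =
   [&& bnd setT k.+1 ka, cov setT k ka, Bm setT k ka == set0 & Bp setT k ka != set0].
Proof.
have BmE : (Bm setT k ka == set0) = [forall v, kp ka v != - k.+1%:Z].
  apply/eqP/forallP => [E v|H].
    apply/negP => /eqP h; have : v \in Bm setT k ka by rewrite !inE h eqxx.
    by rewrite E inE.
  by apply/setP => v; rewrite !inE /=; exact: negbTE (H v).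
have fa : [forall v, (absz (kp ka v) <= k)%N || (kp ka v == k.+1%:Z)] =
          bnd setT k.+1 ka && (Bm setT k ka == set0).
  rewrite BmE; apply/forallP/andP => [H|[/forallP H1 /forallP H2] v].
    split; apply/forallP => v; have := H v; rewrite ?in_setT /=;
      move: (kp ka v) => x; clear; lia.
  have := H1 v; have := H2 v; rewrite in_setT /=; move: (kp ka v) => x; clear; lia.
have fb : (k.+1%:Z \in [seq kp ka v | v <- enum V]) = (Bp setT k ka != set0).
  apply/mapP/set0Pn => [[v _ E]|[v]].
    by exists v; rewrite !inE -E eqxx.
  by rewrite !inE => /eqP <-; exists v; rewrite ?mem_enum.
rewrite covE allE fa fb.
by case: (bnd _ _ _); case: (cov _ _ _); case: (_ == set0); case: (_ != set0).
Qed.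

Lemma W_kappa (Hac : acyclic tau) :
  \sum_(ka : {ffun V -> col} | valid setT (kp ka)) Wp (nv G) [seq kp ka v | v <- enum V]
  = 'X ^+ #|Sk setT|.
Proof.
rewrite /Wp big_split /=.
set n := nv G.
have partA : \sum_(ka : {ffun V -> col} | valid setT (kp ka)) \sum_(k < n.+1)
   (((all (fun x => (absz x <= k)%N) [seq kp ka v | v <- enum V] &&
      covm k [seq kp ka v | v <- enum V]) : nat)%:R * (-1) ^+ (n + k)) = 1 :> {poly rat}.
  apply: (etrans _ (fR1 {poly rat} Hac setT)); rewrite exchange_big /= /fR cardsT card_ord.
  apply: eq_bigr => k _; rewrite -mulr_suml mulrC; congr (_ * _).
  rewrite -natr_sum; congr (_%:R).
  under eq_bigr => ka _ do rewrite c1E.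
  rewrite sum_bool_card; apply: eq_card => ka; by rewrite !inE /= normalT.
rewrite partA exchange_big /=.
rewrite (eq_bigr (fun k : 'I_n.+1 => \sum_(P0 : {set V} | P0 \subset Sk setT)
    (((P0 != set0) : nat)%:R * ((-1) ^+ (n - #|P0| + k) * ('X - 1) ^+ #|P0|)
    * (Ck (setT :\: P0) k)%:R : {poly rat}))); last first.
  move=> k _.
  transitivity (\sum_(ka in Dset setT k) ((((Bm setT k ka == set0) && (Bp setT k ka != set0)) : nat)%:R
     * ((-1) ^+ (n - #|Bp setT k ka| + k) * ('X - 1) ^+ #|Bp setT k ka|) : {poly rat})).
    rewrite big_mkcond [RHS]big_mkcond; apply: eq_bigr => ka _.
    rewrite c2E count_map_card (_ : #|[pred v | kp ka v == k.+1%:Z]| = #|Bp setT k ka|); last first.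
      by apply: eq_card => v; rewrite !inE.
    rewrite !inE /= normalT /=; case: (valid _ _) => //=.
    by case: (bnd _ _ _); case: (cov _ _ _) => //=; rewrite mulr0n mul0r.
  rewrite (@sum_Dset _ setT k (fun P0 M0 => ((((M0 == set0) && (P0 != set0)) : nat)%:R
     * ((-1) ^+ (n - #|P0| + k) * ('X - 1) ^+ #|P0|) : {poly rat})) (ltn_ord k)) /=.
  rewrite [RHS]big_mkcond; apply: eq_bigr => P0 _.
  rewrite (bigD1 set0) //= big1 ?addr0; last first.
    by move=> M0 /negbTE ->; rewrite /= mulr0n mul0r mul0rn.
  rewrite eqxx sub0set setU0 disjoints_subset setC0 subsetT /= andbT.
  by case: (P0 \subset Sk setT) => /=; [rewrite mulr_natr | rewrite mulr0n].
rewrite exchange_big /=.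
have -> : ('X : {poly rat}) ^+ #|Sk setT| = (1 + ('X - 1)) ^+ #|Sk setT| by rewrite addrC subrK.
rewrite -sum_subset_pow [RHS](bigD1 set0) ?sub0set //= cards0 expr0.
congr (_ + _); rewrite [RHS]big_mkcondr; apply: eq_bigr => P0 sP.
case: (boolP (P0 != set0)) => ne /=; last by rewrite big1 // => k _; rewrite mulr0n !mul0r.
have nP : (n - #|P0| = #|setT :\: P0|)%N.
  by rewrite setTD -{1}(card_ord n) -(cardsC P0) addKn.
transitivity (('X - 1) ^+ #|P0| * fR {poly rat} (setT :\: P0)); last by rewrite fR1 // mulr1.
rewrite /fR mulr_sumr; apply: eq_bigr => k _; rewrite nP; ring.
Qed.


Lemma proper_ext (k1 k2 : V -> int) : k1 =1 k2 -> Defs.proper k1 = Defs.proper k2.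
Proof. by move=> h; apply: eq_forallb => e; rewrite !h. Qed.

Lemma preserves_ext (k1 k2 : V -> int) : k1 =1 k2 -> preserves tau k1 = preserves tau k2.
Proof. by move=> h; apply: eq_forallb => e; apply: eq_forallb => b; rewrite !h. Qed.

Lemma valid_pp (kap : V -> int) : valid setT kap = Defs.proper kap && preserves tau kap.
Proof.
apply/forallP/andP => [H|[/forallP H1 /forallP H2] e].
  split; apply/forallP => e; have := H e; rewrite /inR' !in_setT /= /okE /okE' => /and3P[a b c] //.
  by apply/forallP => -[].
rewrite /inR' !in_setT /okE /okE' /=; apply/and3P; split.
- exact: H1 e.
- exact: (forallP (H2 e) false).
- exact: (forallP (H2 e) true).
Qed.

Lemma nsinks_Sk : #|[pred v | is_sink tau v]| = #|Sk setT|.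
Proof.
apply: eq_card => v; rewrite !inE /=; apply: eq_forallb => e; apply: eq_forallb => b.
by rewrite /inR' !in_setT.
Qed.

Lemma Ycoef_card (m : seq int) : (forall x, x \in m -> (absz x <= NN)%N) ->
  #|[pred k : {ffun V -> seq_sub m} |
      let kap := fun v => ssval (k v) in
      [&& Defs.proper kap, preserves tau kap &
          perm_eq [seq kap v | v <- enum V] m]]| =
  #|[pred ka : {ffun V -> col} | valid setT (kp ka) && perm_eq [seq kp ka v | v <- enum V] m]|.
Proof.
move=> hm.
pose F := fun k : {ffun V -> seq_sub m} => [ffun v => colof (ssval (k v))].
have kpF k : kp (F k) =1 (fun v => ssval (k v)).
  by move=> v; rewrite /kp ffunE valcK // hm // (ssvalP (k v)).
have Finj : injective F.
  move=> k1 k2 E; apply/ffunP => v; apply: val_inj => /=.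
  by rewrite -(kpF k1 v) -(kpF k2 v) E.
rewrite -(card_imset _ Finj); apply: eq_card => ka.
apply/imsetP/idP => [[k kA ->]|].
  move: kA; rewrite !inE /= valid_pp (proper_ext (kpF k)) (preserves_ext (kpF k)).
  by rewrite (eq_map (kpF k)) andbA.
rewrite inE => /andP[va pm].
have Hm v : kp ka v \in m by rewrite -(perm_mem pm); apply: map_f; rewrite mem_enum.
pose k := [ffun v => (SeqSub (Hm v) : seq_sub m)].
have kk : (fun v => ssval (k v)) =1 kp ka by move=> v; rewrite /k ffunE.
exists k.
  rewrite inE /= (proper_ext kk) (preserves_ext kk) (eq_map kk) pm andbT -valid_pp //.
by apply/ffunP => v; rewrite /F !ffunE /= colofK.
Qed.

End Part5.

End Comb.

Definition Ms (n : nat) : seq (seq int) :=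
  undup [seq sort (fun x y : int => x <= y) [seq ((nat_of_ord (ka i))%:Z - (n.+1)%:Z) | i <- enum 'I_n]
        | ka : {ffun 'I_n -> 'I_((n.+1).*2.+1)} <- enum {ffun 'I_n -> 'I_((n.+1).*2.+1)}].

Definition Tn (n : nat) (f : series) : {poly rat} := \sum_(m <- Ms n) f m *: Wp n m.

Lemma leT_total : total (fun x y : int => x <= y).
Proof. by move=> x y; exact: le_total. Qed.
Lemma leT_tr : transitive (fun x y : int => x <= y).
Proof. by move=> x y z; exact: le_trans. Qed.
Lemma leT_anti : antisymmetric (fun x y : int => x <= y).
Proof. by move=> x y; exact: le_anti. Qed.

Lemma Ms_size n m : m \in Ms n -> size m = n.
Proof.
rewrite mem_undup => /mapP[ka _ ->]; by rewrite size_sort size_map size_enum_ord.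
Qed.

Lemma Ms_bnd n m : m \in Ms n -> forall x, x \in m -> (absz x <= n.+1)%N.
Proof.
rewrite mem_undup => /mapP[ka _ ->] x; rewrite mem_sort => /mapP[i _ ->].
have := ltn_ord (ka i); move: (ka i : nat) => c; clear; lia.
Qed.

Lemma Ms_sorted n m : m \in Ms n -> sort (fun x y : int => x <= y) m = m.
Proof.
rewrite mem_undup => /mapP[ka _ ->]; apply: sorted_sort; first exact: leT_tr.
exact: sort_sorted leT_total _.
Qed.

Lemma Tn_YP (P : signed_poset) : Tn (nv (sp_graph P)) (YP P) = 'X ^+ nsinks P.
Proof.
set G := sp_graph P; set tau := @sp_tau P.
rewrite /nsinks (nsinks_Sk tau) -(W_kappa (@sp_orient P) (@sp_acyclic P)) /Tn /YP.
rewrite big_seq; under eq_bigr => m hm.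
  rewrite /Ycoef (@Ycoef_card _ tau _ (Ms_bnd hm)) scaler_nat -sumr_const big_mkcondl.
  over.
rewrite /= -big_seq.
under eq_bigr => m _ do rewrite big_mkcond /=.
rewrite exchange_big /= [RHS]big_mkcond; apply: eq_bigr => ka _.
case: (boolP (valid tau setT (kp ka))) => va; last by rewrite big1 // => m _; case: ifP.
set s := [seq kp ka v | v <- enum 'I_(nv G)].
have sM : sort (fun x y : int => x <= y) s \in Ms (nv G).
  by rewrite mem_undup; apply: map_f; rewrite mem_enum.
rewrite (bigD1_seq _ sM (undup_uniq _)) /= big_seq_cond big1 ?addr0; last first.
  move=> m /andP[hm nm].
  case: ifP => // pm; case/negP: nm; apply/eqP.
  by rewrite -(Ms_sorted hm); apply/(perm_sortP leT_total leT_tr leT_anti); rewrite perm_sym.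
have ps : perm_eq (sort (fun x y : int => x <= y) s) s by rewrite perm_sort perm_refl.
by rewrite (_ : perm_eq s _ = true) ?(Wp_perm _ ps) // perm_sym ps.
Qed.

Lemma Ycoef_size (P : signed_poset) (m : monomial) : size m != nv (sp_graph P) -> Ycoef P m = 0%N.
Proof.
move=> nn; apply: eq_card0 => k; apply/negP; rewrite inE /= => /and3P[_ _ pm].
by have := perm_size pm; rewrite size_map size_enum_ord => E; rewrite E eqxx in nn.
Qed.

Lemma Tn_YP0 (P : signed_poset) n : n != nv (sp_graph P) -> Tn n (YP P) = 0.
Proof.
move=> nn; rewrite /Tn big_seq big1 // => m hm.
by rewrite /YP Ycoef_size ?(Ms_size hm) // scaler_nat mulr0n.
Qed.

Definition bounded (f : series) (D : nat) := forall m : monomial, (D <= size m)%N -> f m = 0.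

Lemma bounded_le f D D' : bounded f D -> (D <= D')%N -> bounded f D'.
Proof. by move=> h hD m hm; apply: h; exact: leq_trans hD hm. Qed.

Lemma Tn_bounded f D n : bounded f D -> (D <= n)%N -> Tn n f = 0.
Proof.
move=> hf hn; rewrite /Tn big_seq big1 // => m hm.
by rewrite hf ?scale0r // (Ms_size hm).
Qed.

Lemma YP_bounded (P : signed_poset) : bounded (YP P) (nv (sp_graph P)).+1.
Proof.
move=> m hm; rewrite /YP Ycoef_size //.
by apply/negP => /eqP E; move: hm; rewrite E ltnn.
Qed.

Lemma inY_bounded (s : seq (rat * signed_poset)) :
  exists D, bounded (fun m => \sum_(p <- s) p.1 * YP p.2 m) D.
Proof.
elim: s => [|p s [D hD]]; first by exists 0%N => m _; rewrite big_nil.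
exists (maxn D (nv (sp_graph p.2)).+1) => m hm; rewrite big_cons.
rewrite (hD m); last exact: leq_trans (leq_maxl _ _) hm.
by rewrite YP_bounded ?mulr0 ?addr0 // (leq_trans (leq_maxr _ _) hm).
Qed.

Definition bndf (f : series) : nat :=
  match excluded_middle_informative (exists D, bounded f D) with
  | left H => proj1_sig (constructive_indefinite_description _ H)
  | right _ => 0%N
  end.

Lemma bndfP f D : bounded f D -> bounded f (bndf f).
Proof.
move=> hD; rewrite /bndf; case: excluded_middle_informative => [H|H]; last by case: H; exists D.
exact: proj2_sig (constructive_indefinite_description _ H).
Qed.

Definition phiY (f : series) : {poly rat} := \sum_(n < bndf f) Tn n f.

Lemma sum_bound f D1 D2 : bounded f D1 -> (D1 <= D2)%N ->
  \sum_(n < D2) Tn n f = \sum_(n < D1) Tn n f.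
Proof.
move=> hb h; rewrite (big_ord_widen _ (fun n => Tn n f) h) (bigID (fun i : 'I_D2 => (i < D1)%N)) /= [X in _ + X]big1 ?addr0 //.
by move=> n; rewrite -leqNgt => h1; exact: Tn_bounded hb h1.
Qed.

Lemma phiE f D : bounded f D -> phiY f = \sum_(n < D) Tn n f.
Proof.
move=> hD; have hb := bndfP hD; rewrite /phiY.
case: (leqP (bndf f) D) => h; first by rewrite (sum_bound hb h).
by rewrite (sum_bound hD (ltnW h)).
Qed.

Lemma Tn_lin n a f g : Tn n (fun m => a * f m + g m) = a *: Tn n f + Tn n g.
Proof.
by rewrite /Tn scaler_sumr -big_split; apply: eq_bigr => m _; rewrite scalerDl scalerA.
Qed.

Theorem mainTheorem7 :
  exists phi : series -> {poly rat},
    (forall (a : rat) (f g : series), inY f -> inY g ->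
        phi (fun m => a * f m + g m) = a *: phi f + phi g) /\
    (forall P : signed_poset, phi (YP P) = 'X^(nsinks P)).
Proof.
exists phiY; split.
  move=> a f g [s Ef] [t Eg].
  have [Df hf] : exists D, bounded f D by rewrite Ef; exact: inY_bounded.
  have [Dg hg] : exists D, bounded g D by rewrite Eg; exact: inY_bounded.
  have hfD := bounded_le hf (leq_maxl Df Dg).
  have hgD := bounded_le hg (leq_maxr Df Dg).
  have hh : bounded (fun m => a * f m + g m) (maxn Df Dg).
    by move=> m hm; rewrite hfD ?hgD // mulr0 addr0.
  rewrite (phiE hh) (phiE hfD) (phiE hgD) scaler_sumr -big_split.
  by apply: eq_bigr => n _; exact: Tn_lin.
move=> P; rewrite (phiE (@YP_bounded P)) big_ord_recr /= Tn_YP big1 ?add0r // => i _.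
by apply: Tn_YP0; rewrite neq_ltn ltn_ord.
Qed.
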